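(* Let $\mathcal P_0=\{p\in\mathbb C[z]:p(0)=0\}$. Let $\pi$ be a non-zero submultiplicative seminorm on $\mathcal P_0$ and let $\{p_k\}_{k\in\mathbb N}$ be a sequence in $\mathcal P_0$ such that $\{p_k:k\in\mathbb N\}$ is dense in $\mathcal P_0$ with respect to any seminorm on $\mathcal P_0$. Assume that there exist sequences $\{n_k\}_{k\in\mathbb N}$ and $\{m_k\}_{k\in\mathbb N}$ of positive integers and a sequence $\{c_k\}_{k\in\mathbb N}$ of complex numbers such that $\pi(c_kz^{n_k}-p_k)\to0$ and $\pi(z(1+z)^{m_k}-p_k)\to0$ as $k\to\infty$. Then $\pi$ is a norm and the completion $A$ of $(\mathcal P_0,\pi)$ is an infinite dimensional chaotic Banach algebra with $z$ as a chaotic element.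
   Context: A function $\pi$ on an algebra is submultiplicative if $\pi(ab)\le\pi(a)\pi(b)$. A Banach algebra is a complex algebra, possibly without unit, with a complete submultiplicative norm; $A^{\#}=A\oplus\mathrm{span}\{\mathbf 1\}$ is its unitalization. An element $a\in A$ is chaotic if both $\{wa^n:w\in\mathbb C,\ n\in\mathbb N\}$ and $\{(\mathbf 1+a)^na:n\in\mathbb N\}$ are dense in $A$; $A$ is chaotic if it has a chaotic element. $\mathbb N$ denotes the positive integers. *)

(* Defs.v *)
(* The complex field is  R[i]  (mathcomp-real-closed)
   for an arbitrary  R : realType  (every realType is isomorphic to the reals). *)
From mathcomp Require Import all_boot all_order all_algebra.
From mathcomp Require Import all_classical all_reals all_analysis.
From mathcomp.real_closed Require Export complex.
Set Implicit Arguments. Unset Strict Implicit. Unset Printing Implicit Defensive.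
Import Order.TTheory GRing.Theory Num.Theory.
Import numFieldNormedType.Exports.
Local Open Scope ring_scope.
Local Open Scope complex_scope.
Local Open Scope classical_set_scope.

Definition P0 (R : realType) : set {poly R[i]} := [set p | p.[0] = 0].

Definition seminormP0 (R : realType) (s : {poly R[i]} -> R) : Prop :=
  [/\ forall p, P0 p -> 0 <= s p,
      forall (c : R[i]) p, P0 p -> (s (c *: p))%:C = `|c| * (s p)%:C &
      forall p q, P0 p -> P0 q -> s (p + q) <= s p + s q].

Definition submultP0 (R : realType) (s : {poly R[i]} -> R) : Prop :=
  forall p q, P0 p -> P0 q -> s (p * q) <= s p * s q.

Definition dense_all_seminorms (R : realType) (pk : nat -> {poly R[i]}) : Prop :=
  forall s : {poly R[i]} -> R, seminormP0 s ->
  forall p, P0 p -> forall e : R, 0 < e -> exists k, s (p - pk k) < e.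

Definition banach_alg_mul (R : realType) (A : completeNormedModType R[i])
    (mul : A -> A -> A) : Prop :=
  associative mul /\
  [/\ forall a b c, mul (a + b) c = mul a c + mul b c,
      forall a b c, mul a (b + c) = mul a b + mul a c,
      forall (w : R[i]) a b, mul (w *: a) b = w *: mul a b,
      forall (w : R[i]) a b, mul a (w *: b) = w *: mul a b &
      forall a b, `|mul a b| <= `|a| * `|b|].

(* a^n for n >= 1 (a^1 = a, a^(n+1) = a a^n) *)
Definition apow (T : Type) (mul : T -> T -> T) (a : T) (n : nat) : T :=
  iter n.-1 (mul a) a.

(* (1 + a)^n a, computed in the unitalization: (1 + a) x = x + a x *)
Definition opow_a (T : zmodType) (mul : T -> T -> T) (a : T) (n : nat) : T :=
  iter n (fun x => x + mul a x) a.

Definition chaotic (R : realType) (A : completeNormedModType R[i])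
    (mul : A -> A -> A) (a : A) : Prop :=
  dense [set x | exists (w : R[i]) (n : nat), (0 < n)%N /\ x = w *: apow mul a n]
  /\ dense [set x | exists n : nat, (0 < n)%N /\ x = opow_a mul a n].

Definition infinite_dim (R : realType) (A : completeNormedModType R[i]) : Prop :=
  ~ exists (n : nat) (v : 'I_n -> A),
      forall a : A, exists c : 'I_n -> R[i], a = \sum_(j < n) c j *: v j.

Definition is_completion (R : realType) (s : {poly R[i]} -> R)
    (A : completeNormedModType R[i]) (mul : A -> A -> A)
    (iota : {poly R[i]} -> A) : Prop :=
  (forall p q, P0 p -> P0 q -> iota (p + q) = iota p + iota q) /\
  [/\ forall (c : R[i]) p, P0 p -> iota (c *: p) = c *: iota p,
      forall p q, P0 p -> P0 q -> iota (p * q) = mul (iota p) (iota q),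
      forall p, P0 p -> `|iota p| = (s p)%:C,
      dense (iota @` (@P0 R)) &
      continuous (fun x : A * A => mul x.1 x.2)].

(* Main.v *)
Require Import Defs.
From mathcomp Require Import all_boot all_order all_algebra.
From mathcomp Require Import all_classical all_reals all_analysis.
From mathcomp.real_closed Require Import complex.
Import Order.TTheory GRing.Theory Num.Theory.
Import numFieldNormedType.Exports.
Local Open Scope ring_scope.
Local Open Scope complex_scope.
Local Open Scope classical_set_scope.
Set Implicit Arguments. Unset Strict Implicit. Unset Printing Implicit Defensive.

Section Basics.
Variable R : realType.
Local Notation C := R[i].

Definition nc (c : C) : R := complex.Re `|c|.

Lemma ncE (c : C) : `|c| = (nc c)%:C.
Proof. by rewrite /nc RRe_real //; apply: normr_real. Qed.

Lemma nc_ge0 c : 0 <= nc c.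
Proof. by have := normr_ge0 c; rewrite ncE (_ : 0 = (0:R)%:C) // lecR. Qed.

Lemma ncM x y : nc (x * y) = nc x * nc y.
Proof. by apply: complexI; rewrite rmorphM /= -!ncE normrM. Qed.

Lemma ncD x y : nc (x + y) <= nc x + nc y.
Proof. by rewrite -lecR rmorphD /= -!ncE ler_normD. Qed.

Lemma ncN x : nc (- x) = nc x.
Proof. by rewrite /nc normrN. Qed.

Lemma ncB x y : nc x - nc y <= nc (x - y).
Proof.
rewrite lerBlDr; have := ncD (x - y) y; by rewrite subrK.
Qed.

Lemma nc1 : nc 1 = 1.
Proof. by apply: complexI; rewrite -ncE normr1. Qed.

Lemma ncR (r : R) : 0 <= r -> nc r%:C = r.
Proof. by move=> r0; apply: complexI; rewrite -ncE ger0_norm // lecR. Qed.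

Lemma nc_eq0 x : (nc x == 0) = (x == 0).
Proof. by rewrite -(inj_eq (@complexI R)) -ncE normr_eq0. Qed.

Lemma ncX x n : nc (x ^+ n) = nc x ^+ n.
Proof. by elim: n => [|n IH]; rewrite ?expr0 ?nc1 // !exprS ncM IH. Qed.

Lemma P00 : P0 (0 : {poly C}). Proof. by rewrite /P0 /= horner0. Qed.
Lemma P0D p q : P0 p -> P0 q -> P0 (p + q :> {poly C}).
Proof. by rewrite /P0 /= hornerD => -> ->; rewrite addr0. Qed.
Lemma P0N p : P0 p -> P0 (- p :> {poly C}).
Proof. by rewrite /P0 /= hornerN => ->; rewrite oppr0. Qed.
Lemma P0B p q : P0 p -> P0 q -> P0 (p - q :> {poly C}).
Proof. by move=> ? ?; apply: P0D => //; apply: P0N. Qed.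
Lemma P0Z c p : P0 p -> P0 (c *: p :> {poly C}).
Proof. by rewrite /P0 /= hornerZ => ->; rewrite mulr0. Qed.
Lemma P0Ml p q : P0 p -> P0 (p * q :> {poly C}).
Proof. by rewrite /P0 /= hornerM => ->; rewrite mul0r. Qed.
Lemma P0Mr p q : P0 q -> P0 (p * q :> {poly C}).
Proof. by rewrite /P0 /= hornerM => ->; rewrite mulr0. Qed.
Lemma P0X : P0 ('X : {poly C}). Proof. by rewrite /P0 /= hornerX. Qed.
Lemma P0Xn n : (0 < n)%N -> P0 ('X^n : {poly C}).
Proof. by case: n => // n _; rewrite exprS; apply: P0Ml; apply: P0X. Qed.

Variable pi : {poly C} -> R.
Hypothesis Hsn : seminormP0 pi.
Hypothesis Hsm : submultP0 pi.

Lemma pi_ge0 p : P0 p -> 0 <= pi p.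
Proof. by case: Hsn => H _ _; apply: H. Qed.

Lemma piZ c p : P0 p -> pi (c *: p) = nc c * pi p.
Proof.
case: Hsn => _ H _ Pp; apply: complexI; by rewrite H // ncE rmorphM.
Qed.

Lemma piD p q : P0 p -> P0 q -> pi (p + q) <= pi p + pi q.
Proof. by case: Hsn => _ _ H; apply: H. Qed.

Lemma piN p : P0 p -> pi (- p) = pi p.
Proof. by move=> Pp; rewrite -scaleN1r piZ // ncN nc1 mul1r. Qed.

Lemma piBC p q : P0 p -> P0 q -> pi (p - q) = pi (q - p).
Proof. by move=> Pp Pq; rewrite -[RHS]piN ?opprB //; apply: P0B. Qed.

Lemma pi_tri a b c : P0 a -> P0 b -> P0 c ->
  pi (a - c) <= pi (a - b) + pi (b - c).
Proof.
move=> Pa Pb Pc; have -> : a - c = (a - b) + (b - c) by rewrite addrA subrK.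
by apply: piD; apply: P0B.
Qed.

Lemma pi_le p q : P0 p -> P0 q -> pi p <= pi q + pi (p - q).
Proof.
move=> Pp Pq; have := pi_tri Pp Pq P00; rewrite !subr0 addrC.
by rewrite piBC.
Qed.

Lemma piM p q : P0 p -> P0 q -> pi (p * q) <= pi p * pi q.
Proof. by apply: Hsm. Qed.

Lemma N_mul p s : P0 p -> pi p = 0 -> pi (p * s) = 0.
Proof.
move=> Pp p0.
have Ps : P0 (s - (s.[0])%:P) by rewrite /P0 /= hornerD hornerN hornerC subrr.
have -> : p * s = p * (s - (s.[0])%:P) + s.[0] *: p.
  by rewrite mulrDr mulrN [p * _%:P]mulrC mul_polyC subrK.
apply/eqP; rewrite eq_le pi_ge0; last by apply: P0D; [apply: P0Ml|apply: P0Z].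
rewrite andbT; apply: le_trans (piD (P0Ml _ Pp) (P0Z _ Pp)) _.
rewrite piZ // p0 mulr0 addr0; apply: le_trans (piM Pp Ps) _.
by rewrite p0 mul0r.
Qed.

End Basics.
Arguments P00 {R}. Arguments P0X {R}.

Section Dense.
Variable R : realType.
Local Notation C := R[i].
Variable pi : {poly C} -> R.
Hypothesis Hsn : seminormP0 pi.
Hypothesis Hsm : submultP0 pi.
Variable pk : nat -> {poly C}.
Hypothesis Hpk : forall k, P0 (pk k).
Hypothesis Hdense : dense_all_seminorms pk.

Lemma cvg_ev (f : nat -> R) : f @ \oo --> (0:R) ->
  forall e : R, 0 < e -> exists N, forall n, (N <= n)%N -> f n < e.
Proof.
move=> /cvgrPdist_lt H e e0; have [N _ HN] := H e e0; exists N => n Nn.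
by have := HN n Nn; rewrite /= sub0r normrN; apply: le_lt_trans (ler_norm _).
Qed.

Lemma sn_coef (D : nat) : seminormP0 (fun p : {poly C} => pi p + nc p`_D).
Proof.
split.
- by move=> p Pp; apply: addr_ge0; [apply: pi_ge0|apply: nc_ge0].
- move=> c p Pp; rewrite coefZ (piZ Hsn) // ncM -mulrDr rmorphM /= -ncE //.
- move=> p q Pp Pq; rewrite coefD.
  have := piD Hsn Pp Pq; have := ncD p`_D q`_D.
  move=> h1 h2; apply: le_trans (lerD h2 h1) _.
  by rewrite addrACA.
Qed.

Lemma large_k q e K : P0 q -> 0 < e -> exists k, (K <= k)%N /\ pi (q - pk k) < e.
Proof.
move=> Pq e0.
set D := (\max_(j < K) size (pk j) + size q).+1.
have PXD : P0 ('X^D : {poly C}) by apply: P0Xn.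
have hpk : forall j, (j < K)%N -> (pk j)`_D = 0.
  move=> j jK; apply: nth_default.
  have := @leq_bigmax _ (fun i : 'I_K => size (pk i)) (Ordinal jK); rewrite /= => h.
  by apply: leq_trans h _; rewrite /D; apply: leq_trans (leq_addr _ _) (leqnSn _).
have hq : q`_D = 0.
  by apply: nth_default; rewrite /D; apply: leq_trans (leq_addl _ _) (leqnSn _).
have piX0 := pi_ge0 Hsn PXD.
set d := e / (pi 'X^D + 1).
have d0 : 0 < d by apply: divr_gt0 => //; apply: ltr_pwDr.
set q' := q + d%:C *: 'X^D.
have Pq' : P0 q' by apply: P0D => //; apply: P0Z.
have [k hk] := Hdense (sn_coef D) Pq' d0.
have Pk := Hpk k.
have hc : (q' - pk k)`_D = d%:C - (pk k)`_D.
  by rewrite coefB coefD coefZ coefXn eqxx hq add0r mulr1.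
rewrite hc in hk.
exists k; split.
  rewrite leqNgt; apply/negP => kK.
  move: hk; rewrite hpk // subr0 ncR ?ltW // -ltrBrDr subrr.
  by rewrite ltNge pi_ge0 //; apply: P0B.
have h1 : pi (q' - pk k) < d.
  by apply: le_lt_trans hk; rewrite lerDl nc_ge0.
apply: le_lt_trans (pi_tri Hsn Pq Pq' Pk) _.
have -> : q - q' = - (d%:C *: 'X^D) by rewrite /q' opprD addrA subrr add0r.
rewrite (piN Hsn); last by apply: P0Z.
rewrite (piZ Hsn) // ncR ?ltW //.
have -> : e = d * pi 'X^D + d.
  by rewrite /d -[X in _ + X]mulr1 -mulrDr divfK // gt_eqF // ltr_pwDr.
by rewrite ltrD2l.
Qed.

Lemma approx_seq (u : nat -> {poly C}) : (forall k, P0 (u k)) ->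
  (fun k => pi (u k - pk k)) @ \oo --> (0:R) ->
  forall q, P0 q -> forall e, 0 < e -> exists k, pi (q - u k) < e.
Proof.
move=> Pu hu q Pq e e0.
have e2 : 0 < e / 2 by apply: divr_gt0.
have [N HN] := cvg_ev hu e2.
have [k [Nk hk]] := large_k N Pq e2.
exists k; apply: le_lt_trans (pi_tri Hsn Pq (Hpk k) (Pu k)) _.
rewrite (piBC Hsn (Hpk k) (Pu k)) (splitr e); apply: ltrD => //.
exact: HN.
Qed.

End Dense.

Section Norm.
Variable R : realType.
Local Notation C := R[i].
Variable pi : {poly C} -> R.
Hypothesis Hsn : seminormP0 pi.
Hypothesis Hsm : submultP0 pi.
Hypothesis Hnz : exists p, P0 p /\ pi p != 0.
Hypothesis Horb : forall q, P0 q -> forall e, 0 < e ->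
  exists m, pi (q - 'X * (1 + 'X) ^+ m) < e.

Let fm (m : nat) : {poly C} := 'X * (1 + 'X) ^+ m.
Let Pfm m : P0 (fm m). Proof. by rewrite /fm; apply: P0Ml; apply: P0X. Qed.

Lemma fm_eval m a : (fm m).[a] = a * (1 + a) ^+ m.
Proof. by rewrite /fm !hornerE. Qed.

Lemma fm_coef1 m : (fm m)`_1 = 1.
Proof.
rewrite /fm coefXM /= -horner_coef0 horner_exp hornerD hornerX.
by rewrite !hornerE expr1n.
Qed.

Lemma ncMn2 (x : C) : nc (x *+ 2) = nc x *+ 2.
Proof. by apply: complexI; rewrite rmorphMn /= -!ncE normrMn. Qed.

Lemma root_contra (a : C) (g p : {poly C}) : a != 0 -> P0 g -> pi g != 0 ->
  P0 p -> pi p = 0 -> p = g * ('X - a%:P) -> False.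
Proof.
move=> a0 Pg pg0 Pp pp0 pE.
have pg : 0 < pi g by rewrite lt_def pg0 pi_ge0.
have key : forall f, P0 f -> nc f.[a] <= pi f.
  move=> f Pf.
  have : root (f - (f.[a])%:P) a by rewrite /root hornerD hornerN hornerC subrr.
  case/factor_theorem => s sE.
  have E : f.[a] *: g - g * f = - (p * s).
    rewrite pE -mulrA [('X - _) * s]mulrC -sE mulrDr mulrN.
    by rewrite [g * _%:P]mulrC mul_polyC opprB.
  have Pgf : P0 (g * f) by apply: P0Ml.
  have := pi_le Hsn (P0Z f.[a] Pg) Pgf.
  have h0 : pi (p * s) = 0 by apply: (N_mul Hsn Hsm).
  rewrite E (piN Hsn); last by apply: P0Ml.
  rewrite h0 addr0 (piZ Hsn) //.
  move=> h; have := le_trans h (piM Hsm Pg Pf).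
  by rewrite mulrC ler_pM2l.
have na : 0 < nc a by rewrite lt_def nc_eq0 a0 nc_ge0.
have [h1|h1] := lerP 1 (nc (1 + a)).
- have [m hm] := Horb P00 na.
  have := key _ (P0B P00 (Pfm m)); rewrite hornerD hornerN horner0 add0r ncN.
  rewrite fm_eval ncM ncX => h.
  have : nc a <= nc a * nc (1 + a) ^+ m.
    by rewrite ler_peMr ?nc_ge0 // exprn_ege1.
  move=> h2; have := le_lt_trans (le_trans h2 h) hm.
  by rewrite ltxx.
- have PXX : P0 ('X *+ 2 : {poly C}) by rewrite /P0 /= hornerMn hornerX mul0rn.
  have [m hm] := Horb PXX na.
  have := key _ (P0B PXX (Pfm m)); rewrite hornerD hornerN hornerMn hornerX.
  rewrite fm_eval => h.
  have h2 : nc a <= nc (a *+ 2 - a * (1 + a) ^+ m).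
    apply: le_trans (ncB _ _); rewrite ncMn2 ncM ncX lerBrDr.
    rewrite mulr2n lerD2l ler_piMr ?nc_ge0 // exprn_ile1 ?nc_ge0 //.
    exact: ltW.
  have := le_lt_trans (le_trans h2 h) hm.
  by rewrite ltxx.
Qed.

Lemma take2 (f : {poly C}) : P0 f -> take_poly 2 f = f`_1 *: 'X.
Proof.
move=> Pf; apply/polyP => i; rewrite coef_take_poly coefZ coefX.
case: i => [|[|i]] //=; first by rewrite -horner_coef0 Pf mulr0.
  by rewrite mulr1.
by rewrite mulr0.
Qed.

Lemma nil_contra j : (2 <= j)%N -> pi 'X^j = 0 -> pi 'X^(j.-1) != 0 -> False.
Proof.
move=> j2.
have j1 : (0 < j.-1)%N by move: j2; case: j => [|[|j]].
have jp : (0 < j)%N by apply: leq_trans j2.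
move=> pj pj1.
have Pj1 : P0 ('X^(j.-1) : {poly C}) by apply: P0Xn.
have Pj : P0 ('X^j : {poly C}) by apply: P0Xn.
set a := pi 'X^(j.-1).
have a0 : 0 < a by rewrite lt_def pj1 pi_ge0.
set B := if j == 2 then 1 else pi 'X^(j - 2).
have B0 : 0 <= B.
  rewrite /B; case: eqP => // jn2; apply: pi_ge0 => //; apply: P0Xn.
  by rewrite subn_gt0 ltn_neqAle eq_sym; apply/andP; split => //; apply/eqP.
have key : forall f, P0 f -> nc f`_1 * a <= B * pi f.
  move=> f Pf.
  have fE : 'X^(j - 2) * f = f`_1 *: 'X^(j.-1) + 'X^j * drop_poly 2 f.
    rewrite -{1}(poly_take_drop 2 f) take2 // mulrDr -scalerAr -exprSr.
    rewrite mulrCA -exprD.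
    have -> : (j - 2).+1 = j.-1 by rewrite -subSn // subn2.
    by rewrite subnK // mulrC.
  have PXf : P0 ('X^(j - 2) * f) by apply: P0Mr.
  have h1 : pi ('X^(j - 2) * f) <= B * pi f.
    rewrite /B; case: eqP => jn2.
      by rewrite jn2 subnn expr0 mul1r mul1r.
    apply: (piM Hsm _ Pf); apply: P0Xn.
    by rewrite subn_gt0 ltn_neqAle eq_sym; apply/andP; split => //; apply/eqP.
  apply: le_trans h1; rewrite /a -(piZ Hsn) //.
  have := pi_le Hsn (P0Z f`_1 Pj1) PXf.
  have -> : f`_1 *: 'X^(j.-1) - 'X^(j - 2) * f = - ('X^j * drop_poly 2 f).
    by rewrite fE opprD addrA subrr add0r.
  have h0 : pi ('X^j * drop_poly 2 f) = 0 by apply: (N_mul Hsn Hsm).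
  rewrite (piN Hsn); last by apply: P0Ml.
  by rewrite h0 addr0.
have e0 : 0 < a / (B + 1) by apply: divr_gt0 => //; apply: ltr_pwDr.
have [m hm] := Horb P00 e0.
have := key _ (Pfm m); rewrite fm_coef1 nc1 mul1r.
rewrite -(piN Hsn (Pfm m)) -[- fm m]add0r => h.
have : B * pi (0 - fm m) <= B * (a / (B + 1)).
  by apply: ler_wpM2l => //; apply: ltW.
move=> h2; have := le_trans h h2.
rewrite mulrA ler_pdivlMr; last by apply: ltr_pwDr.
by rewrite mulrDr mulr1 mulrC gerDl leNgt a0.
Qed.

Lemma norm_pi : forall p, P0 p -> pi p = 0 -> p = 0.
Proof.
have main : forall n (p : {poly C}), (size p < n)%N -> P0 p -> pi p = 0 -> p = 0.
  elim=> [|n IH] p; first by [].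
  move=> sp Pp pp0; have [//|p0] := eqVneq p 0; exfalso.
  have [m0 [r rr pE]] := multiplicity_XsubC p 0.
  move: rr; rewrite p0 /= => rr.
  rewrite subr0 in pE.
  have r0 : r != 0 by apply: contraNneq p0 => r0; rewrite pE r0 mul0r.
  have m0p : (0 < m0)%N.
    case: m0 pE => // pE; move: Pp; rewrite /P0 /= pE expr0 mulr1 => hr.
    by move: rr; rewrite /root hr eqxx.
  have [/closed_rootP [a ra]|/negPn/size_poly1P [c c0 rE]] := boolP (size r != 1%N).
  - have a0 : a != 0 by apply: contraNneq rr => <-.
    have [r' rE] := factor_theorem _ _ ra.
    set g := r' * 'X^m0.
    have pgE : p = g * ('X - a%:P) by rewrite pE rE /g mulrAC.
    have Pg : P0 g by apply: P0Mr; apply: P0Xn.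
    have g0 : g != 0 by apply: contraNneq p0 => g0; rewrite pgE g0 mul0r.
    have sg : (size g < n)%N.
      move: sp; rewrite pgE size_mul // ?size_XsubC ?addn2 //.
      by rewrite polyXsubC_eq0.
    apply: (root_contra a0 Pg _ Pp pp0 pgE).
    by apply/negP => /eqP /(IH _ sg Pg) /eqP; rewrite (negPf g0).
  -     have pXE : 'X^m0 = c^-1 *: p by rewrite pE rE mul_polyC scalerA mulVf // scale1r.
    have pX : pi 'X^m0 = 0 by rewrite pXE (piZ Hsn) // pp0 mulr0.
    have [m1|m1] := eqVneq m0 1%N.
    + move: pX; rewrite m1 expr1 => pX.
      case: Hnz => f [Pf pf]; move: pf.
      have : root f 0 by rewrite /root Pf.
      case/factor_theorem => f' fE.
      by rewrite fE subr0 mulrC (N_mul Hsn Hsm) ?eqxx //; apply: P0X.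
    + apply: (@nil_contra m0) => //.
        by rewrite ltn_neqAle eq_sym m1.
      apply/negP => /eqP h.
      have sX : (size ('X^(m0.-1) : {poly C}) < n)%N.
        by move: sp; rewrite pE rE mul_polyC size_scale // !size_polyXn prednK.
      have hm : (0 < m0.-1)%N by rewrite -ltnS prednK // ltn_neqAle eq_sym m1.
      have := IH _ sX (@P0Xn R _ hm) h.
      by move=> /eqP; rewrite expf_eq0 polyX_eq0 andbF.
move=> p Pp pp0; exact: (main (size p).+1).
Qed.

End Norm.

Lemma dense_closed_ext (T U : topologicalType) (D : set T) (f : T -> U)
  (Cs : set U) : dense D -> continuous f -> closed Cs ->
  (forall x, D x -> Cs (f x)) -> forall x, Cs (f x).
Proof.
move=> dD cf cC hD x; apply: contrapT => nC.
have oO : open (~` (f @^-1` Cs)).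
  by apply: closed_openC; apply: (proj1 (continuous_closedP f) cf).
have [y [Oy Dy]] := dD _ (ex_intro _ x nC) oO.
by apply: Oy; apply: hD.
Qed.

Lemma ccomp (S T U : topologicalType) (f : S -> T) (g : T -> U) :
  continuous f -> continuous g -> continuous (fun x => g (f x)).
Proof. by move=> cf cg x; apply: continuous_comp; [apply: cf|apply: cg]. Qed.

Section Ext.
Variable K : numFieldType.
Variable T : topologicalType.
Variable V : normedModType K.

Lemma ext_eq (D : set T) (f g : T -> V) : dense D -> continuous f ->
  continuous g -> (forall x, D x -> f x = g x) -> forall x, f x = g x.
Proof.
move=> dD cf cg hD x.
have cl : closed [set (0 : V)].
  by apply: accessible_closed_set1; apply: hausdorff_accessible; apply: norm_hausdorff.
have H := @dense_closed_ext T V D (fun x => f x - g x) [set 0] dD.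
apply/subr0_eq; apply: (H _ cl).
  by move=> y; apply: continuousB; [apply: cf|apply: cg].
by move=> y Dy; rewrite /= hD // subrr.
Qed.

Lemma pair_cont (W : topologicalType) (b : W) :
  continuous (fun a : T => (a, b)).
Proof. by move=> a; apply: cvg_pair; [apply: cvg_id|apply: cvg_cst]. Qed.

Lemma pair_cont2 (W : topologicalType) (a : W) :
  continuous (fun b : T => (a, b)).
Proof. by move=> b; apply: cvg_pair; [apply: cvg_cst|apply: cvg_id]. Qed.

End Ext.

Lemma closed_ge0 (K : numFieldType) : closed [set x : K | 0 <= x].
Proof.
have -> : [set x : K | 0 <= x] = (fun x : K => `|x| - x) @^-1` [set 0].
  apply/seteqP; split => x /=.
    by move=> x0; rewrite ger0_norm // subrr.
  by move/eqP; rewrite subr_eq0 => /eqP <-.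
apply: (proj1 (continuous_closedP _)).
  move=> x; apply: continuousB; first by apply: norm_continuous.
  exact: cvg_id.
apply: accessible_closed_set1; apply: hausdorff_accessible; apply: norm_hausdorff.
Qed.

Section Banach.
Variable R : realType.
Local Notation C := R[i].
Variable pi : {poly C} -> R.
Hypothesis Hsn : seminormP0 pi.
Hypothesis Hsm : submultP0 pi.
Variable A : completeNormedModType C.
Variable mul : A -> A -> A.
Variable iota : {poly C} -> A.
Hypothesis Hc : is_completion pi mul iota.

Lemma iD : forall p q, P0 p -> P0 q -> iota (p + q) = iota p + iota q.
Proof. by case: Hc. Qed.
Lemma iZ : forall c p, P0 p -> iota (c *: p) = c *: iota p.
Proof. by case: Hc => _ []. Qed.
Lemma iM : forall p q, P0 p -> P0 q -> iota (p * q) = mul (iota p) (iota q).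
Proof. by case: Hc => _ []. Qed.
Lemma iN : forall p, P0 p -> `|iota p| = (pi p)%:C.
Proof. by case: Hc => _ []. Qed.
Lemma iDense : dense (iota @` (@P0 R)).
Proof. by case: Hc => _ []. Qed.
Lemma iCont : continuous (fun x : A * A => mul x.1 x.2).
Proof. by case: Hc => _ []. Qed.

Lemma iB p q : P0 p -> P0 q -> iota (p - q) = iota p - iota q.
Proof.
move=> Pp Pq; rewrite iD //; last by apply: P0N.
by rewrite -scaleN1r iZ // scaleN1r.
Qed.

Lemma contl b : continuous (fun a => mul a b).
Proof. by have := ccomp (@pair_cont A A b) iCont; apply. Qed.
Lemma contr a : continuous (fun b => mul a b).
Proof. by have := ccomp (@pair_cont2 A A a) iCont; apply. Qed.

Lemma cont_id : continuous (fun a : A => a).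
Proof. by move=> a; apply: cvg_id. Qed.
Lemma cont_cst (x : A) : continuous (fun a : A => x).
Proof. by move=> a; apply: cvg_cst. Qed.
Lemma contD (f g : A -> A) : continuous f -> continuous g ->
  continuous (fun a => f a + g a).
Proof. by move=> cf cg a; apply: continuousD; [apply: cf|apply: cg]. Qed.
Lemma contZ (w : C) (f : A -> A) : continuous f -> continuous (fun a => w *: f a).
Proof. by move=> cf a; apply: continuousZ; [apply: cvg_cst|apply: cf]. Qed.

Lemma contl_f (f : A -> A) b : continuous f -> continuous (fun a => mul (f a) b).
Proof. by move=> cf; have := ccomp cf (contl (b:=b)); apply. Qed.
Lemma contr_f (f : A -> A) b : continuous f -> continuous (fun a => mul b (f a)).
Proof. by move=> cf; have := ccomp cf (contr (a:=b)); apply. Qed.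

Ltac cont := repeat first [ apply: contD | apply: contZ | apply: cont_id
  | apply: cont_cst | apply: contl_f | apply: contr_f ].

Lemma assoc_mul : associative mul.
Proof.
have h1 : forall a q r, P0 q -> P0 r ->
    mul (mul a (iota q)) (iota r) = mul a (mul (iota q) (iota r)).
  move=> a q r Pq Pr; move: a; apply: (ext_eq iDense); try by cont.
  by move=> _ [p Pp <-]; rewrite -!iM ?mulrA //; apply: P0Ml.
have h2 : forall a b r, P0 r ->
    mul (mul a b) (iota r) = mul a (mul b (iota r)).
  move=> a b r Pr; move: b; apply: (ext_eq iDense); try by cont.
  by move=> _ [q Pq <-]; rewrite h1.
move=> a b c; move: c; apply: (ext_eq iDense); try by cont.
by move=> _ [r Pr <-]; rewrite h2.
Qed.

Lemma mulDl_all a b c : mul (a + b) c = mul a c + mul b c.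
Proof.
have h1 : forall a q r, P0 q -> P0 r ->
    mul (a + iota q) (iota r) = mul a (iota r) + mul (iota q) (iota r).
  move=> a' q r Pq Pr; move: a'; apply: (ext_eq iDense); try by cont.
  move=> _ [p Pp <-].
  have Ppq := P0D Pp Pq; have Ppr := P0Ml r Pp; have Pqr := P0Ml r Pq.
  by rewrite -iD // -!iM // mulrDl iD.
have h2 : forall a b r, P0 r ->
    mul (a + b) (iota r) = mul a (iota r) + mul b (iota r).
  move=> a' b' r Pr; move: b'; apply: (ext_eq iDense); try by cont.
  by move=> _ [q Pq <-]; rewrite h1.
move: c; apply: (ext_eq iDense); try by cont.
by move=> _ [r Pr <-]; rewrite h2.
Qed.

Lemma mulDr_all a b c : mul a (b + c) = mul a b + mul a c.
Proof.
have h1 : forall a q r, P0 q -> P0 r ->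
    mul (iota r) (a + iota q) = mul (iota r) a + mul (iota r) (iota q).
  move=> a' q r Pq Pr; move: a'; apply: (ext_eq iDense); try by cont.
  move=> _ [p Pp <-].
  have Ppq := P0D Pp Pq; have Ppr := P0Ml p Pr; have Pqr := P0Ml q Pr.
  by rewrite -iD // -!iM // mulrDr iD.
have h2 : forall a b r, P0 r ->
    mul (iota r) (a + b) = mul (iota r) a + mul (iota r) b.
  move=> a' b' r Pr; move: b'; apply: (ext_eq iDense); try by cont.
  by move=> _ [q Pq <-]; rewrite h1.
move: a; apply: (ext_eq iDense); try by cont.
by move=> _ [r Pr <-]; rewrite h2.
Qed.

Lemma mulZl_all (w : C) a b : mul (w *: a) b = w *: mul a b.
Proof.
have h1 : forall a q, P0 q -> mul (w *: a) (iota q) = w *: mul a (iota q).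
  move=> a' q Pq; move: a'; apply: (ext_eq iDense); try by cont.
  move=> _ [p Pp <-].
  have Pwp := P0Z w Pp; have Ppq := P0Ml q Pp.
  by rewrite -iZ // -!iM // -scalerAl iZ.
move: b; apply: (ext_eq iDense); try by cont.
by move=> _ [q Pq <-]; rewrite h1.
Qed.

Lemma mulZr_all (w : C) a b : mul a (w *: b) = w *: mul a b.
Proof.
have h1 : forall a q, P0 q -> mul (iota q) (w *: a) = w *: mul (iota q) a.
  move=> a' q Pq; move: a'; apply: (ext_eq iDense); try by cont.
  move=> _ [p Pp <-].
  have Pwp := P0Z w Pp; have Ppq := P0Ml p Pq.
  by rewrite -iZ // -!iM // -scalerAr iZ.
move: a; apply: (ext_eq iDense); try by cont.
by move=> _ [q Pq <-]; rewrite h1.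
Qed.

Lemma contN (f : A -> A) : continuous f -> continuous (fun a => `|f a|).
Proof. by move=> cf; apply: (ccomp cf); apply: norm_continuous. Qed.

Lemma contCB (f g : A -> (C:numFieldType)) : continuous f -> continuous g ->
  continuous (fun a => f a - g a).
Proof. move=> cf cg x; exact: (continuousB (cf x) (cg x)). Qed.
Lemma contCM (f g : A -> (C:numFieldType)) : continuous f -> continuous g ->
  continuous (fun a => f a * g a).
Proof. move=> cf cg x; exact: (continuousM (cf x) (cg x)). Qed.
Lemma contCc (c : C) : continuous (fun a : A => (c : (C:numFieldType))).
Proof. by move=> x; apply: cvg_cst. Qed.

Lemma norm_mul a b : `|mul a b| <= `|a| * `|b|.
Proof.
have H : forall (f : A -> (C : numFieldType)), continuous f ->
    (forall x, (iota @` (@P0 R)) x -> 0 <= f x) -> forall x, 0 <= f x.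
  move=> f cf hD x; exact: (@dense_closed_ext A _ _ f _ iDense cf (@closed_ge0 C) hD).
have h1 : forall a q, P0 q -> `|mul a (iota q)| <= `|a| * `|iota q|.
  move=> a' q Pq; rewrite -subr_ge0.
  pose f := fun a => `|a| * `|iota q| - `|mul a (iota q)|.
  have : 0 <= f a'.
    apply: H.
      apply: contCB; first by apply: contCM; [apply: (contN cont_id)|apply: contCc].
      exact: (contN (contl (b:=_))).
    move=> _ [p Pp <-]; rewrite /f subr_ge0 -iM // !iN //; last by apply: P0Ml.
    by rewrite -rmorphM lecR; apply: Hsm.
  by [].
rewrite -subr_ge0.
pose f := fun b => `|a| * `|b| - `|mul a b|.
have : 0 <= f b.
  apply: H.
    apply: contCB; first by apply: contCM; [apply: contCc|apply: (contN cont_id)].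
    exact: (contN (contr (a:=_))).
  by move=> _ [q Pq <-]; rewrite /f subr_ge0 h1.
by [].
Qed.

Lemma banach : banach_alg_mul mul.
Proof.
split; first exact: assoc_mul.
split; [exact: mulDl_all|exact: mulDr_all|exact: mulZl_all|exact: mulZr_all|exact: norm_mul].
Qed.

End Banach.

Lemma dense_approx (K : numFieldType) (V : normedModType K) (D S : set V) :
  dense D -> (forall x, D x -> forall e : K, 0 < e -> exists2 s, S s & `|x - s| < e) ->
  dense S.
Proof.
move=> dD H O [a Oa] oO.
have : nbhs a O by move: oO; rewrite openE => /(_ a Oa).
case/nbhs_ballP => e /= e0 hb.
have e2 : 0 < e / 2 by apply: divr_gt0.
have [x [bx Dx]] := dD _ (ex_intro _ a (ballxx a e2)) (ball_open a (e / 2)).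
have [s Ss hs] := H x Dx _ e2.
exists s; split => //; apply: hb.
have bx' : `|a - x| < e / 2.
  have : ball_ Num.Def.normr a (e / 2) x by rewrite ball_normE.
  by [].
suff : ball_ Num.Def.normr a e s by rewrite ball_normE.
rewrite /ball_ /=.
apply: le_lt_trans (ler_distD x a s) _; rewrite (splitr e).
exact: ltrD bx' hs.
Qed.

Section Final.
Variable R : realType.
Local Notation C := R[i].
Variable pi : {poly C} -> R.
Hypothesis Hsn : seminormP0 pi.
Hypothesis Hsm : submultP0 pi.
Hypothesis Hnorm : forall p, P0 p -> pi p = 0 -> p = 0.
Variable A : completeNormedModType C.
Variable mul : A -> A -> A.
Variable iota : {poly C} -> A.
Hypothesis Hc : is_completion pi mul iota.

Lemma iota0 : iota 0 = 0.
Proof. by rewrite -(scale0r ('X : {poly C})) (iZ Hc) ?scale0r //; apply: P0X. Qed.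

Lemma iota_sum (I : Type) (r : seq I) (Q : pred I) (F : I -> {poly C}) :
  (forall i, P0 (F i)) ->
  iota (\sum_(i <- r | Q i) F i) = \sum_(i <- r | Q i) iota (F i).
Proof.
move=> PF; elim: r => [|x r IH]; first by rewrite !big_nil iota0.
rewrite !big_cons; case: (Q x) => //.
rewrite (iD Hc) ?IH //.
by apply: (big_ind (fun p => P0 p)) => //; [apply: P00|move=> ? ?; apply: P0D].
Qed.

Lemma inf_dim : infinite_dim A.
Proof.
move=> [n [v hv]].
have hc : forall i : 'I_n.+1, exists c : 'I_n -> C,
    iota 'X^(i.+1) = \sum_(j < n) c j *: v j by move=> i; apply: hv.
have [F hF] := choice hc.
pose M : 'M[C]_(n.+1, n) := \matrix_(i, j) F i j.
have rk : (0 < \rank (kermx M))%N.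
  by rewrite mxrank_ker subn_gt0 ltnS rank_leq_col.
have [i ui] : exists i, row i (kermx M) != 0.
  apply: contrapT => hn; move: rk; rewrite lt0n mxrank_eq0 => /negP; apply.
  apply/eqP/row_matrixP => i; rewrite row0; apply: contrapT => h.
  by apply: hn; exists i; apply/eqP.
set u := row i (kermx M) in ui.
have uM : u *m M = 0 by rewrite /u -row_mul mulmx_ker row0.
pose P : {poly C} := \sum_(k < n.+1) u 0 k *: 'X^(k.+1).
have PP : P0 P.
  apply: (big_ind (fun p => P0 p)); [apply: P00|move=> ? ?; apply: P0D|].
  by move=> k _; apply: P0Z; apply: P0Xn.
have iP : iota P = 0.
  rewrite /P iota_sum; last by move=> k; apply: P0Z; apply: P0Xn.
  have e1 : forall k : 'I_n.+1,
      iota (u 0 k *: 'X^(k.+1)) = \sum_(j < n) (u 0 k * F k j) *: v j.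
    move=> k; rewrite (iZ Hc); last by apply: P0Xn.
    by rewrite hF scaler_sumr; apply: eq_bigr => j _; rewrite scalerA.
  rewrite (eq_bigr _ (fun k _ => e1 k)) exchange_big /=.
  apply: big1 => j _.
  rewrite -scaler_suml.
  have -> : \sum_(k < n.+1) u 0 k * F k j = (u *m M) 0 j.
    by rewrite mxE; apply: eq_bigr => k _; rewrite /M !mxE.
  by move: uM => /matrixP/(_ 0 j); rewrite [in RHS]mxE => ->; rewrite scale0r.
have P0' : P = 0.
  apply: Hnorm => //; apply: (@complexI R).
  by rewrite -(iN Hc) // iP normr0.
have uk : forall k, u 0 k = 0.
  move=> k; have := congr1 (fun p : {poly C} => p`_k.+1) P0'.
  rewrite coef0 /P coef_sum (bigD1 k) //= coefZ coefXn eqxx mulr1 big1 ?addr0 //.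
  move=> l lk; rewrite coefZ coefXn eqSS.
  by rewrite (_ : (k == l :> nat) = false) ?mulr0 //; apply/negbTE; rewrite eq_sym.
have u0 : u = 0 by apply/rowP => k; rewrite uk mxE.
by move: ui; rewrite u0 eqxx.
Qed.

Lemma apow_iota k : (0 < k)%N -> apow mul (iota 'X) k = iota 'X^k.
Proof.
case: k => // k _; rewrite /apow /=.
elim: k => [|k IH] /=; first by rewrite expr1.
rewrite IH -(iM Hc); [by rewrite -exprS|exact: P0X|exact: P0Xn].
Qed.

Lemma opow_iota k : opow_a mul (iota 'X) k = iota ('X * (1 + 'X) ^+ k).
Proof.
elim: k => [|k IH] /=; first by rewrite expr0 mulr1.
have Pf : P0 ('X * (1 + 'X) ^+ k : {poly C}) by apply: P0Ml; apply: P0X.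
have PXf : P0 ('X * ('X * (1 + 'X) ^+ k) : {poly C}) by apply: P0Ml; apply: P0X.
rewrite IH -(iM Hc) //; last by apply: P0X.
rewrite -(iD Hc) //; congr iota. rewrite exprS -{1}(mul1r ('X * _)) -mulrDl.
by rewrite mulrCA.
Qed.

Lemma approx_iota (S : set A) (u : nat -> {poly C}) :
  (forall k, P0 (u k)) -> (forall k, S (iota (u k))) ->
  (forall q, P0 q -> forall e, 0 < e -> exists k, pi (q - u k) < e) -> dense S.
Proof.
move=> Pu Su H; apply: (dense_approx (iDense Hc)).
move=> _ [p Pp <-] e e0.
have er := gtr0_real e0.
set r := complex.Re e.
have eE : e = r%:C by rewrite /r RRe_real.
have r0 : 0 < r by rewrite -ltcR -eE.
have [k hk] := H p Pp r r0.
exists (iota (u k)) => //.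
have hk' : (pi (p - u k))%:C < e by rewrite eE ltcR.
rewrite -(iB Hc) // (iN Hc) //; exact: P0B.
Qed.

End Final.

Unset Implicit Arguments.

Theorem lemma3p1 (R : realType) (pi : {poly R[i]} -> R)
  (pk : nat -> {poly R[i]}) (n m : nat -> nat) (c : nat -> R[i]) :
  seminormP0 pi -> submultP0 pi -> (exists p, P0 p /\ pi p != 0) ->
  (forall k, P0 (pk k)) -> dense_all_seminorms pk ->
  (forall k, (0 < n k)%N) -> (forall k, (0 < m k)%N) ->
  (fun k => pi (c k *: 'X^(n k) - pk k)) @ \oo --> (0 : R) ->
  (fun k => pi ('X * (1 + 'X) ^+ (m k) - pk k)) @ \oo --> (0 : R) ->
  (forall p, P0 p -> pi p = 0 -> p = 0) /\
  (forall (A : completeNormedModType R[i]) (mul : A -> A -> A)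
          (iota : {poly R[i]} -> A),
     is_completion pi mul iota ->
     [/\ banach_alg_mul mul, infinite_dim A & chaotic mul (iota 'X)]).
Proof.
move=> Hsn Hsm Hnz Hpk Hdense Hn Hm Hc1 Hc2.
have Pu2 : forall k, P0 ('X * (1 + 'X) ^+ (m k) : {poly R[i]}).
  by move=> k; apply: P0Ml; apply: P0X.
have Pu1 : forall k, P0 (c k *: 'X^(n k) : {poly R[i]}).
  by move=> k; apply: P0Z; apply: P0Xn.
have A2 := approx_seq Hsn Hpk Hdense Pu2 Hc2.
have A1 := approx_seq Hsn Hpk Hdense Pu1 Hc1.
have Horb : forall q, P0 q -> forall e, 0 < e ->
    exists m0, pi (q - 'X * (1 + 'X) ^+ m0) < e.
  by move=> q Pq e e0; have [k hk] := A2 q Pq e e0; exists (m k).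
have Hnorm := norm_pi Hsn Hsm Hnz Horb.
split => // A mul iota Hc; split.
- by have := banach Hsm Hc; apply.
- by have := inf_dim Hnorm Hc; apply.
- split.
  + apply: (approx_iota Hc Pu1) => // k.
    exists (c k), (n k); split => //.
    by rewrite (apow_iota Hc) // (iZ Hc) //; apply: P0Xn.
  + apply: (approx_iota Hc Pu2) => // k.
    by exists (m k); split => //; rewrite (opow_iota Hc).
Qed.
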